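(* Assume $k=2$ and write $l=l_1$, $y=y_1$. (1) If $r=e-1$, then $b=(l+1)e+h\le(l+2)e-2$, and $b=(l+2)e-2$ if and only if $h=e-2$. (2) If $r=e-2$, then $b=(l+1)(e-1)+h-p-1$ and $c=(p+l+2)(e-1)-b$. Further: (a) $l+1\le p\le2l+2$, and $p=2l+2$ implies $h>0$; (b) $(l+1)(e-3)\le b\le(l+1)(e-2)+e-3$; moreover $b=(l+1)(e-3)$ if and only if ($p=2l+2$ and $h=1$) or ($p=2l+1$ and $h=0$); and $b=(l+1)(e-2)+e-3$ implies $p=l+1$, $p>1$, $h=e-2$, $y=e+1$.
   Context: Let $(R,\mathfrak m)$ be a one-dimensional local Noetherian domain with quotient field $K$, not regular, analytically irreducible (the integral closure $\overline R$ of $R$ in $K$ is a DVR and a finite $R$-module) and residually rational. Let $v$ be the valuation of $\overline R$ normalized so a uniformizer $t$ has value 1, $v(R)=\{v(a):a\in R\setminus\{0\}\}$, $\mathfrak C=(R:_K\overline R)=t^c\overline R$ with $c$ the least element of $v(R)$ with $c+\mathbb N\subseteq v(R)$, $\delta=\ell_R(\overline R/R)$, $r=\ell_R((R:_K\mathfrak m)/R)$, $b=(c-\delta)r-\delta$, $e$ the least positive element of $v(R)$. Let $x\in\mathfrak m$ with $v(x)=e$ and $k=\ell_R(R/(\mathfrak C+xR))$. Let $p$ be the integer with $c-e\le pe<c$ and $h=(p+1)e-c$. When $k=2$, $y_1$ is the unique $y\in v(R)$ with $0<y<c$ and $y-e\notin v(R)$, and $l_1\ge0$ is the integer with $y_1+l_1e<c\le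 y_1+(l_1+1)e$; then $v(R)=\{0,e,\dots,pe\}\cup\{m\ge c\}\cup\{y_1,y_1+e,\dots,y_1+l_1e\}$. *)

(* Defs.v *)
(* A one-dimensional local domain R is modelled as a subring
   (a predicate) of its quotient field K; R-modules are R-submodules of K. *)
From mathcomp Require Import all_boot all_order all_algebra.
Set Implicit Arguments.
Unset Strict Implicit.
Unset Printing Implicit Defensive.
Import Order.TTheory GRing.Theory Num.Theory.
Local Open Scope ring_scope.

Section Defs.
Variable K : fieldType.
Implicit Types (R M N A B C I P : K -> Prop) (v : K -> int).

Definition subset_of A B := forall z, A z -> B z.

Definition subring R :=
  [/\ R 0, R 1, (forall a b, R a -> R b -> R (a - b))
   & (forall a b, R a -> R b -> R (a * b))].

Definition submod R M :=
  [/\ M 0, (forall a b, M a -> M b -> M (a + b))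
   & (forall s a, R s -> M a -> M (s * a))].

Definition ideal R I := subset_of I R /\ submod R I.

Definition rspan R (s : seq K) : K -> Prop := fun u =>
  exists a : nat -> K, (forall i, R (a i)) /\ u = \sum_(i < size s) a i * s`_i.

Definition fin_gen R M := exists s : seq K, forall u, M u <-> rspan R s u.

Definition noetherian R := forall I, ideal R I -> fin_gen R I.

Definition quotfield R :=
  forall z, exists a b, [/\ R a, R b, b != 0 & z = a / b].

Definition runit R a := [/\ R a, a != 0 & R a^-1].

Definition maxideal R : K -> Prop := fun a => R a /\ ~ runit R a.

(* local: the non-units form an ideal (the unique maximal ideal) *)
Definition local_ring R := ideal R (maxideal R).

Definition prime_ideal R P :=
  [/\ ideal R P, ~ P 1 & forall a b, R a -> R b -> P (a * b) -> P a \/ P b].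

Definition one_dim_local R :=
  (exists a, maxideal R a /\ a != 0) /\
  forall P, prime_ideal R P -> (exists a, P a /\ a != 0) ->
    forall a, P a <-> maxideal R a.

(* regular (dim 1): the maximal ideal is principal *)
Definition regular R :=
  exists g, R g /\ forall a, maxideal R a <-> exists s, R s /\ a = s * g.

(* normalized discrete valuation on K (value of 0 irrelevant) *)
Definition valuation v :=
  [/\ (forall x y, x != 0 -> y != 0 -> v (x * y) = v x + v y),
      (forall x y, x != 0 -> y != 0 -> x + y != 0 ->
                   Num.min (v x) (v y) <= v (x + y))
    & exists t, t != 0 /\ v t = 1].

Definition vring v : K -> Prop := fun x => x = 0 \/ 0 <= v x.

Definition integral R x :=
  exists q : {poly K}, [/\ q \is monic, (forall i, R q`_i) & root q x].

(* the integral closure of R in K is the DVR of v and is a finite R-module *)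
Definition analytically_irreducible R v :=
  [/\ valuation v, (forall x, integral R x <-> vring v x) & fin_gen R (vring v)].

(* R/m -> Rbar/t Rbar is onto (residue fields coincide) *)
Definition residually_rational R v :=
  forall u, vring v u -> exists a, R a /\ (u = a \/ 0 < v (u - a)).

Definition vset R v (n : nat) := exists a, [/\ R a, a != 0 & v a = n%:Z].

Definition colon A B : K -> Prop := fun z => forall b, B b -> A (z * b).

Definition sum_mul C (x : K) R : K -> Prop :=
  fun z => exists a s, [/\ C a, R s & z = a + x * s].

Definition simple_step R A B :=
  [/\ subset_of A B, (exists z, B z /\ ~ A z)
    & forall P, submod R P -> subset_of A P -> subset_of P B ->
        subset_of P A \/ subset_of B P].

(* l_R(M/N) = n : there is a composition series N = M_0 < ... < M_n = M *)
Definition rlength R M N (n : nat) :=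
  exists f : nat -> K -> Prop,
    [/\ (forall i, submod R (f i)), (forall z, f 0%N z <-> N z),
        (forall z, f n z <-> M z)
      & forall i, (i < n)%N -> simple_step R (f i) (f i.+1)].

End Defs.

(* Main.v *)
Require Import Defs.
From mathcomp Require Import all_boot all_order all_algebra.
Import Order.TTheory GRing.Theory Num.Theory.
Local Open Scope ring_scope.
From mathcomp Require Import zify ring.
From Stdlib Require ClassicalDescription.
Set Implicit Arguments.
Unset Strict Implicit.

Section Val.
Variable K : fieldType.
Variable v : K -> int.
Hypothesis hv : valuation v.

Lemma vM x y : x != 0 -> y != 0 -> v (x * y) = v x + v y.
Proof. by case: hv => h _ _; apply: h. Qed.

Lemma v1 : v 1 = 0.
Proof. have := vM (oner_neq0 K) (oner_neq0 K). rewrite mulr1. move: (v 1) => a h. lia. Qed.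

Lemma vN1 : v (-1) = 0.
Proof.
have h : (-1 : K) != 0 by rewrite oppr_eq0 oner_neq0.
have := vM h h. rewrite mulrNN mulr1 v1. lia.
Qed.

Lemma vN z : z != 0 -> v (- z) = v z.
Proof.
move=> hz. have h : (-1 : K) != 0 by rewrite oppr_eq0 oner_neq0.
by rewrite -mulN1r vM // vN1 add0r.
Qed.

Lemma vV z : z != 0 -> v z^-1 = - v z.
Proof.
move=> hz. have hi : z^-1 != 0 by rewrite invr_eq0.
have := vM hz hi. rewrite mulfV // v1. lia.
Qed.

Lemma vX z n : z != 0 -> v (z ^+ n) = n%:Z * v z.
Proof.
move=> hz; elim: n => [|n IH]; first by rewrite expr0 v1 mul0r.
rewrite exprS vM ?expf_neq0 // IH. lia.
Qed.

Lemma vD_min x y : x != 0 -> y != 0 -> x + y != 0 -> Num.min (v x) (v y) <= v (x + y).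
Proof. by case: hv => _ h _; apply: h. Qed.

Lemma vD_ge x y n : x != 0 -> y != 0 -> x + y != 0 -> n <= v x -> n <= v y -> n <= v (x + y).
Proof.
move=> hx hy hxy h1 h2; apply: le_trans (vD_min hx hy hxy).
by rewrite le_min h1.
Qed.

Lemma vD_lt x y : x != 0 -> y != 0 -> v x < v y -> x + y != 0 /\ v (x + y) = v x.
Proof.
move=> hx hy hlt.
have hxy : x + y != 0.
  apply/negP => /eqP e. have ey : y = - x by apply/eqP; rewrite -addr_eq0 addrC e.
  by move: hlt; rewrite ey vN // ltxx.
split => //.
have h1 := vD_min hx hy hxy.
have hny : - y != 0 by rewrite oppr_eq0.
have e : x = (x + y) + - y by rewrite addrK.
have hx' : (x + y) + - y != 0 by rewrite -e.
have h2 := vD_min hxy hny hx'.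
rewrite -e vN // in h2.
move: h1 h2; rewrite !ge_min => /orP [] h1 /orP [] h2; try lia.
Qed.

Definition gev (n : int) (z : K) := z = 0 \/ n <= v z.

Lemma gev_add n x y : gev n x -> gev n y -> gev n (x + y).
Proof.
move=> [->|hx]; first by rewrite add0r.
move=> [->|hy]; first by rewrite addr0; right.
case: (eqVneq x 0) => [->|x0]; first by rewrite add0r; right.
case: (eqVneq y 0) => [->|y0]; first by rewrite addr0; right.
case: (eqVneq (x + y) 0) => [->|xy0]; first by left.
by right; apply: vD_ge.
Qed.

Lemma gev_opp n x : gev n x -> gev n (- x).
Proof.
move=> [->|hx]; first by left; rewrite oppr0.
case: (eqVneq x 0) => [->|x0]; first by left; rewrite oppr0.
by right; rewrite vN.
Qed.

Lemma gev_mul n m x y : gev n x -> gev m y -> gev (n + m) (x * y).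
Proof.
move=> [->|hx]; first by left; rewrite mul0r.
move=> [->|hy]; first by left; rewrite mulr0.
case: (eqVneq x 0) => [->|x0]; first by left; rewrite mul0r.
case: (eqVneq y 0) => [->|y0]; first by left; rewrite mulr0.
right; rewrite vM //. lia.
Qed.

Lemma gev_le n m x : n <= m -> gev m x -> gev n x.
Proof. move=> h [->|hx]; [by left|right; lia]. Qed.

End Val.

Section Ring.
Variable K : fieldType.
Variable R : K -> Prop.
Variable v : K -> int.
Hypothesis hR : subring R.
Hypothesis hai : analytically_irreducible R v.
Hypothesis hrr : residually_rational R v.
Hypothesis hQ : quotfield R.

Lemma hv : valuation v. Proof. by case: hai. Qed.

Lemma R0 : R 0. Proof. by case: hR. Qed.
Lemma R1 : R 1. Proof. by case: hR. Qed.
Lemma RB a b : R a -> R b -> R (a - b). Proof. by case: hR => _ _ h _; apply: h. Qed.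
Lemma RM a b : R a -> R b -> R (a * b). Proof. by case: hR => _ _ _ h; apply: h. Qed.
Lemma RN a : R a -> R (- a). Proof. by move=> h; rewrite -sub0r; apply: RB => //; apply: R0. Qed.
Lemma RD a b : R a -> R b -> R (a + b).
Proof. by move=> ha hb; rewrite -[b]opprK; apply: RB => //; apply: RN. Qed.
Lemma RX a n : R a -> R (a ^+ n).
Proof. move=> ha; elim: n => [|n IH]; [rewrite expr0; apply: R1|rewrite exprS; exact: RM]. Qed.

Lemma R_vring a : R a -> vring v a.
Proof.
move=> ha; case: hai => _ h _; apply/h.
exists ('X - a%:P); split; first exact: monicXsubC.
  move=> i; rewrite coefB coefX coefC.
  case: i => [|[|i]] /=; rewrite ?subr0 ?sub0r; try exact: R0; try exact: R1.
  exact: RN.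
by rewrite root_XsubC.
Qed.

Lemma R_ge0 a : R a -> a != 0 -> 0 <= v a.
Proof. by move=> /R_vring [->|//]; rewrite eqxx. Qed.

Lemma R_gev a : R a -> gev v 0 a.
Proof. by move=> /R_vring. Qed.

Definition vs (A : K -> Prop) (j : int) := exists a, [/\ A a, a != 0 & v a = j].

Lemma vs_vset n : vs R n%:Z <-> vset R v n.
Proof. by split; move=> [a [h1 h2 h3]]; exists a. Qed.

Lemma seq_denom (s : seq K) :
  exists d, [/\ R d, d != 0 & forall i, (i < size s)%N -> R (d * s`_i)].
Proof.
elim: s => [|w s [d [hd d0 hs]]].
  by exists 1; split => //; [exact: R1|exact: oner_neq0].
have [a [b [ha hb b0 ->]]] := hQ w.
exists (d * b); split; first exact: RM.
  by rewrite mulf_neq0.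
case=> [|i] /= hi.
  by rewrite mulrAC -mulrA mulfVK //; apply: RM.
by rewrite mulrAC; apply: RM => //; apply: hs.
Qed.

Lemma conductor_ex : exists N0 : int, forall z, gev v N0 z -> R z.
Proof.
case: hai => _ _ [s hs].
have [d [hd d0 hds]] := seq_denom s.
have hdz : forall z, vring v z -> R (d * z).
  move=> z /hs [a [ha ->]]; rewrite mulr_sumr.
  apply: (big_ind R); [exact: R0|exact: RD|] => i _.
  by rewrite mulrCA; apply: RM => //; apply: hds.
exists (v d) => z [->|hz]; first exact: R0.
case: (eqVneq z 0) => [->|z0]; first exact: R0.
have -> : z = d * (z / d) by rewrite mulrCA mulfV ?mulr1.
apply: hdz; right.
rewrite vM ?invr_eq0 // ?vV //; last exact: hv.
  move: hz; move: (v z) (v d) => p q. lia.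
exact: hv.
Qed.

Lemma approx (A B : K -> Prop) (N0 : int) :
  submod R A -> submod R B ->
  (forall a, A a -> a != 0 -> (exists b, [/\ B b, b != 0 & v b = v a]) -> B a) ->
  (forall z, gev v N0 z -> A z) ->
  forall b, B b -> ~ A b -> exists b', [/\ B b', b' != 0 & ~ vs A (v b')].
Proof.
move=> [A0 AD AM] [B0 BD BM] sAB hN0.
have BM0 := BM.
suff H : forall m : nat, forall b, B b -> ~ A b -> N0 - v b <= m%:Z ->
   exists b', [/\ B b', b' != 0 & ~ vs A (v b')].
  by move=> b hb hnb; apply: (H `|N0 - v b|%N b hb hnb); lia.
elim=> [|m IH] b hb hnb hm.
  by exfalso; apply: hnb; apply: hN0; right; move: hm; move: (v b) => q; lia.
have b0 : b != 0 by apply/negP => /eqP e; apply: hnb; rewrite e.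
case: (ClassicalDescription.excluded_middle_informative (vs A (v b))) => [[a [ha a0 hab]]|hn];
  last by exists b.
have hu : vring v (b / a).
  right; rewrite vM ?invr_eq0 // ?vV //; try exact: hv.
  move: hab; move: (v b) (v a) => p q; lia.
have [l [hl hul]] := hrr hu.
have hla : A (l * a) by apply: AM.
case: hul => [e|hpos].
  by exfalso; apply: hnb; have -> : b = l * a by rewrite -e mulfVK.
have ul0 : b / a - l != 0.
  apply/negP => /eqP e; apply: hnb; move/eqP: e; rewrite subr_eq0 => /eqP e.
  by have -> : b = l * a by rewrite -e mulfVK.
set b' := b - l * a.
have eb' : b' = a * (b / a - l) by rewrite /b' mulrBr mulrCA mulfV // mulr1 mulrC.
have hb' : B b'.
  rewrite /b'; apply: BD => //; rewrite -mulN1r; apply: BM; first by apply: RN; apply: R1.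
  by apply: BM0 => //; apply: sAB => //; exists b.
have hnb' : ~ A b'.
  move=> h; apply: hnb; rewrite (_ : b = b' + l * a); [exact: AD|by rewrite /b' subrK].
apply: (IH b' hb' hnb').
rewrite eb' vM //; last exact: hv.
move: hm hpos; rewrite hab. move: (v b) (v (b / a - l)) => p q. lia.
Qed.

End Ring.

Section Count.
Variable K : fieldType.
Variable R : K -> Prop.
Variable v : K -> int.
Hypothesis hR : subring R.
Hypothesis hai : analytically_irreducible R v.
Hypothesis hrr : residually_rational R v.
Hypothesis hQ : quotfield R.

Let hv := hv hai.

Lemma conductor_R (n : nat) : (forall m, (n <= m)%N -> vset R v m) ->
  forall z, gev v n%:Z z -> R z.
Proof.
move=> hn.
have [N0 hN0] := conductor_ex hR hai hQ.
have sub : submod R R by split; [exact: (R0 hR)|exact: (RD hR)|exact: (RM hR)].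
have subB : submod R (gev v n%:Z).
  split; [by left|exact: (gev_add hv)|].
  move=> s a hs ha; rewrite -[n%:Z]add0r; apply: (gev_mul hv) => //; exact: (R_gev hR hai).
have sAB : forall a, R a -> a != 0 ->
    (exists b, [/\ gev v n%:Z b, b != 0 & v b = v a]) -> gev v n%:Z a.
  move=> a _ _ [b [[->|hb] hb0 eb]]; first by rewrite eqxx in hb0.
  by right; rewrite -eb.
move=> z hz; case: (ClassicalDescription.excluded_middle_informative (R z)) => // hnz.
have [b' [[->|hb'] b0 hnb]] := approx hR hai hrr sub subB
   sAB hN0 hz hnz; first by rewrite eqxx in b0.
have [a [ha a0 ea]] := hn `|v b'|%N ltac:(lia).
exfalso; apply: hnb; exists a; split => //; rewrite ea; lia.
Qed.

Lemma two_new (A B : K -> Prop) j1 j2 :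
  submod R A -> submod R B -> simple_step R A B -> j1 < j2 ->
  vs v B j1 -> vs v B j2 -> ~ vs v A j1 -> ~ vs v A j2 -> False.
Proof.
move=> [A0 AD AM] [B0 BD BM] [sAB _ hss] hlt [b1 [hb1 b10 e1]] [b2 [hb2 b20 e2]] n1 n2.
pose P z := exists a w, [/\ A a, B w, gev v j2 w & z = a + w].
have subP : submod R P.
  split.
  - by exists 0, 0; split => //; [left|rewrite addr0].
  - move=> _ _ [a [w [ha hw gw ->]]] [a' [w' [ha' hw' gw' ->]]].
    exists (a + a'), (w + w'); split; [exact: AD|exact: BD|exact: (gev_add hv)|].
    by rewrite addrACA.
  - move=> s _ hs [a [w [ha hw gw ->]]].
    exists (s * a), (s * w); split; [exact: AM|exact: BM| |by rewrite mulrDr].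
    rewrite -[j2]add0r; apply: (gev_mul hv) => //; exact: (R_gev hR hai).
have [hPA|hBP] := hss P subP (fun z hz => ltac:(by exists z, 0; split => //; [left|rewrite addr0]))
   (fun z => ltac:(by move=> [a [w [ha hw gw ->]]]; apply: BD => //; apply: sAB)).
  apply: n2; exists b2; split => //; apply: hPA.
  by exists 0, b2; split => //; [right; rewrite e2|rewrite add0r].
have [a [w [ha hw [w0|gw] eb]]] := hBP _ hb1.
  by apply: n1; exists b1; split => //; rewrite eb w0 addr0.
case: (eqVneq w 0) => [w0|w0].
  by apply: n1; exists b1; split => //; rewrite eb w0 addr0.
have ea : a = b1 + - w by rewrite eb addrK.
have nw0 : - w != 0 by rewrite oppr_eq0.
have [a0 va] : b1 + - w != 0 /\ v (b1 + - w) = v b1.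
  by apply: (vD_lt hv) => //; rewrite (vN hv) // e1; apply: lt_le_trans gw.
by apply: n1; exists a; split => //; rewrite ea // va.
Qed.
End Count.

Definition db (P : Prop) : bool := if ClassicalDescription.excluded_middle_informative P then true else false.
Lemma dbP (P : Prop) : reflect P (db P).
Proof. by rewrite /db; case: ClassicalDescription.excluded_middle_informative => h; constructor. Qed.

Section Count2.
Variable K : fieldType.
Variable R : K -> Prop.
Variable v : K -> int.
Hypothesis hR : subring R.
Hypothesis hai : analytically_irreducible R v.
Hypothesis hrr : residually_rational R v.
Hypothesis hQ : quotfield R.

Let hv := hv hai.

Lemma step_new (A B N : K -> Prop) (lo N0 : int) :
  submod R A -> submod R B -> simple_step R A B ->
  (forall z, gev v N0 z -> A z) -> (forall z, B z -> z != 0 -> lo <= v z) ->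
  (forall j, vs v N j -> vs v A j) ->
  exists j0, [/\ lo <= j0, j0 < N0, ~ vs v A j0 &
     forall j, (vs v B j /\ ~ vs v N j) <-> ((vs v A j /\ ~ vs v N j) \/ j = j0)].
Proof.
move=> sA sB hss hN0 hlo hNA.
have hss' := hss; case: hss' => sAB [b [hb hnb]] _.
have [b' [hb' b0 hn]] := approx hR hai hrr sA sB (fun a ha _ _ => sAB a ha) hN0 hb hnb.
exists (v b'); split.
- exact: hlo.
- case: (ltP (v b') N0) => // h; exfalso; apply: hn; exists b'; split => //.
  by apply: hN0; right.
- exact: hn.
move=> j; split.
  move=> [hj hnj]; case: (ClassicalDescription.excluded_middle_informative (vs v A j)) => hAj; first by left.
  right; case: (ltgtP j (v b')) => // hlt; exfalso.
    by apply: (two_new hR hai sA sB hss hlt hj) => //; exists b'.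
  by apply: (two_new hR hai sA sB hss hlt _ hj) => //; exists b'.
move=> [[[a [ha a0 ea]] hnj]|->]; first by split => //; exists a; split => //; apply: sAB.
split; first by exists b'.
by move/hNA.
Qed.

Definition newc (M N : K -> Prop) (lo : int) (n : nat) :=
  count (fun j : nat => db (vs v M (lo + j%:Z) /\ ~ vs v N (lo + j%:Z))) (iota 0 n).

Lemma newc_ext M M' N lo n : (forall z, M z <-> M' z) -> newc M N lo n = newc M' N lo n.
Proof.
move=> h; apply: eq_count => j.
apply/dbP/dbP => [] [[a [ha a0 ea]] hn]; (split => //; exists a; split => //); by apply/h.
Qed.

Lemma rlength_count (M N : K -> Prop) (lo N0 : int) (k : nat) :
  rlength R M N k -> (forall z, gev v N0 z -> N z) ->
  (forall z, M z -> z != 0 -> lo <= v z) -> lo <= N0 ->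
  newc M N lo `|N0 - lo|%N = k.
Proof.
move=> [f [hsub hf0 hfk hst]] hN0 hlo hloN0.
have hinc : forall i j, (i + j <= k)%N -> forall z, f i z -> f (i + j)%N z.
  move=> i; elim=> [|j IH] hij z hz; first by rewrite addn0.
  have [s _ _] := hst (i + j)%N ltac:(lia).
  by rewrite addnS; apply: s; apply: IH => //; lia.
have hNf : forall i, (i <= k)%N -> forall z, N z -> f i z.
  by move=> i hi z /hf0 hz; have := hinc 0%N i ltac:(lia) z hz.
have hfM : forall i, (i <= k)%N -> forall z, f i z -> M z.
  by move=> i hi z hz; apply/hfk; have := hinc i (k - i)%N ltac:(lia) z hz; rewrite subnKC.
suff H : forall i, (i <= k)%N -> newc (f i) N lo `|N0 - lo|%N = i.
  by rewrite -(H k (leqnn k)); apply: newc_ext => z; rewrite hfk.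
elim=> [|i IH] hi.
  rewrite /newc (eq_count (a2 := pred0)) ?count_pred0 // => j.
  by apply/dbP => [] [[a [ha a0 ea]] hn]; apply: hn; exists a; split => //; apply/hf0.
have hNA : forall j, vs v N j -> vs v (f i) j.
  move=> j [a [ha a0 ea]]; exists a; split => //; apply: hNf => //; lia.
have [j0 [h1 h2 h3 h4]] := step_new (hsub i) (hsub i.+1) (hst i hi)
  (fun z hz => hNf i ltac:(lia) z (hN0 z hz))
  (fun z hz => hlo z (hfM i.+1 hi z hz))
  hNA.
rewrite /newc (eq_count (a2 := predU (fun j : nat => db (vs v (f i) (lo + j%:Z) /\ ~ vs v N (lo + j%:Z)))
    (pred1 `|j0 - lo|%N))); last first.
  move=> j /=; apply/dbP/orP.
    move/h4 => [h|e]; [by left; apply/dbP|right; apply/eqP; lia].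
  move=> [/dbP h|/eqP e]; apply/h4; [by left|right; lia].
have := count_predUI (fun j : nat => db (vs v (f i) (lo + j%:Z) /\ ~ vs v N (lo + j%:Z)))
    (pred1 `|j0 - lo|%N) (iota 0 `|N0 - lo|).
rewrite (eq_count (a1 := predI _ _) (a2 := pred0)) ?count_pred0; last first.
  move=> j /=; apply/andP => [] [/dbP [hA _] /eqP e]; apply: h3.
  by have <- : lo + j%:Z = j0 by lia.
rewrite addn0 => ->.
move: (IH ltac:(lia)); rewrite /newc => ->.
rewrite (count_uniq_mem _ (iota_uniq 0 _)) mem_iota.
have -> : (0 <= `|j0 - lo| < 0 + `|N0 - lo|)%N by apply/andP; split; lia.
by rewrite addn1.
Qed.

End Count2.

Lemma count_list (P : pred nat) (L : seq nat) n :
  uniq L -> (forall j, j \in L -> P j) -> (forall j, j \in L -> (j < n)%N) ->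
  (size L <= count P (iota 0 n))%N.
Proof.
move=> uL hP hn.
have -> : size L = count (mem L) (iota 0 n).
  rewrite -size_filter; apply: perm_size; apply: uniq_perm => //.
    by apply: filter_uniq; apply: iota_uniq.
  by move=> j; rewrite mem_filter mem_iota /=; case hj: (j \in L) => //=; rewrite hn.
by apply: sub_count => j /=; apply: hP.
Qed.

Lemma count_list_eq (P : pred nat) (L : seq nat) n :
  uniq L -> (forall j, (j < n)%N -> P j = (j \in L)) -> (forall j, j \in L -> (j < n)%N) ->
  count P (iota 0 n) = size L.
Proof.
move=> uL hP hn.
rewrite -size_filter; apply: perm_size; apply: uniq_perm => //.
  by apply: filter_uniq; apply: iota_uniq.
move=> j; rewrite mem_filter mem_iota /= add0n.
case hj: (j < n)%N; first by rewrite hP // andbT.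
by rewrite andbF; apply/esym/negP => /hn; rewrite hj.
Qed.

Lemma count2 (a b n m : nat) : a != b -> (n <= a < n + m)%N -> (n <= b < n + m)%N ->
  count (fun j => (j != a) && (j != b)) (iota n m) = (m - 2)%N.
Proof.
move=> ab ha hb.
have E := count_predUI (pred1 a) (pred1 b) (iota n m).
rewrite (eq_count (a1 := predI _ _) (a2 := pred0)) ?count_pred0 in E; last first.
  by move=> j /=; apply/andP => [] [/eqP -> /eqP e]; move: ab; rewrite e eqxx.
rewrite !(count_uniq_mem _ (iota_uniq n m)) !mem_iota ha hb addn0 in E.
have F := count_predC (predU (pred1 a) (pred1 b)) (iota n m).
rewrite E size_iota in F.
have -> : (m - 2 = count (predC (predU (pred1 a) (pred1 b))) (iota n m))%N by lia.
by apply: eq_count => j /=; rewrite negb_or.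
Qed.

Section Main.
Variable K : fieldType.
Variable R : K -> Prop.
Variable v : K -> int.
Hypothesis hR : subring R.
Hypothesis hQ : quotfield R.
Hypothesis hloc : local_ring R.
Hypothesis hai : analytically_irreducible R v.
Hypothesis hrr : residually_rational R v.
Variables (c e p y l : nat).
Hypothesis hc2 : forall m, (c <= m)%N -> vset R v m.
Hypothesis hc3 : forall c', vset R v c' -> (forall m, (c' <= m)%N -> vset R v m) -> (c <= c')%N.
Hypothesis he1 : (0 < e)%N.
Hypothesis he2 : vset R v e.
Hypothesis he3 : forall n, (0 < n)%N -> vset R v n -> (e <= n)%N.
Hypothesis hp1 : c%:Z - e%:Z <= (p * e)%:Z.
Hypothesis hp2 : (p * e < c)%N.
Hypothesis hy1 : vset R v y.
Hypothesis hy2 : (0 < y < c)%N.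
Hypothesis hy3 : ~ ((e <= y)%N /\ vset R v (y - e)).
Hypothesis hl1 : (y + l * e < c)%N.
Hypothesis hl2 : (c <= y + l.+1 * e)%N.

Let hv := hv hai.
Let S n := vset R v n.

Lemma Rc z : gev v c%:Z z -> R z.
Proof. exact: (conductor_R hR hai hrr hQ hc2). Qed.

Lemma S0 : S 0.
Proof. exists 1; split; [exact: R1 hR|exact: oner_neq0|exact: (v1 hv)]. Qed.

Lemma t_ex : exists t, t != 0 /\ v t = 1.
Proof. by case: hv => _ _. Qed.

Lemma vring_t t n : t != 0 -> v t = 1 -> vring v (t ^+ n).
Proof. by move=> t0 vt; right; rewrite (vX hv) // vt mulr1. Qed.

Lemma maxideal_pos a : maxideal R a -> a = 0 \/ 0 < v a.
Proof.
move=> [ha hna].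
case: (eqVneq a 0) => [->|a0]; first by left.
right; have := R_ge0 hR hai ha a0; rewrite le_eqVlt => /orP [/eqP va0|//].
exfalso.
have hu : vring v a^-1 by right; rewrite (vV hv) // -va0.
have [lam [hl hul]] := hrr hu.
case: hul => [e0|hpos].
  by apply: hna; split => //; rewrite e0.
have [mI [m0 mD mM]] := hloc.
set beta := 1 - a * lam.
have ebeta : beta = a * (a^-1 - lam) by rewrite /beta mulrBr mulfV.
have hb : R beta by apply: RB hR _ _ (R1 hR) (RM hR ha hl).
have one_unit : ~ maxideal R 1.
  by move=> [_ h]; apply: h; split; [exact: R1 hR|exact: oner_neq0|rewrite invr1; exact: R1 hR].
have hmal : maxideal R (lam * a) by apply: mM.
have nb : ~ maxideal R beta.
  move=> hmb; apply: one_unit.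
  have -> : (1 : K) = lam * a + beta by rewrite /beta mulrC addrC subrK.
  exact: mD.
case: (eqVneq (a^-1 - lam) 0) => [d0|d0].
  by apply: hna; split => //; move/eqP: d0; rewrite subr_eq0 => /eqP ->.
have b0 : beta != 0 by rewrite ebeta mulf_neq0.
apply: nb; split => // [] [_ _ hbi].
have := R_ge0 hR hai hbi; rewrite invr_eq0 => /(_ b0).
rewrite (vV hv) // ebeta (vM hv) // -va0.
move: hpos; move: (v (a^-1 - lam)) => q; lia.
Qed.


Lemma colonC a : colon R (vring v) a -> a != 0 -> c%:Z <= v a.
Proof.
move=> ha a0.
have haR : R a by rewrite -[a]mulr1; apply: ha; right; rewrite (v1 hv).
have va := R_ge0 hR hai haR a0.
have [t [t0 vt]] := t_ex.
suff : (c <= `|v a|)%N by lia.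
apply: hc3; first by exists a; split => //; lia.
move=> m hm; exists (a * t ^+ (m - `|v a|)); split.
- by apply: ha; apply: vring_t.
- by rewrite mulf_neq0 // expf_neq0.
- rewrite (vM hv) ?expf_neq0 // (vX hv) // vt mulr1. lia.
Qed.

Variable x : K.
Hypothesis hx2 : v x = e%:Z.
Let N := sum_mul (colon R (vring v)) x R.

Lemma vsN (j : nat) : vs v N j%:Z -> (c <= j)%N \/ ((e <= j)%N /\ S (j - e)).
Proof.
move=> [z [[a [s [ha hs ez]]] z0 vz]].
case: (eqVneq (x * s) 0) => [xs0|xs0].
  by left; move: vz; rewrite ez xs0 addr0 => vz; have := colonC ha; rewrite ez xs0 addr0 in z0; move/(_ z0); lia.
have [x0 s0] : x != 0 /\ s != 0 by move: xs0; rewrite mulf_eq0 negb_or => /andP.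
have vs0 := R_ge0 hR hai hs s0.
have vxs : v (x * s) = e%:Z + v s by rewrite (vM hv) // hx2.
have hright : v z = v (x * s) -> (c <= j)%N \/ ((e <= j)%N /\ S (j - e)).
  move=> ev; right; split; first by move: vz; rewrite ev vxs; lia.
  exists s; split => //; move: vz; rewrite ev vxs; lia.
case: (eqVneq a 0) => [a0|a0].
  by apply: hright; rewrite ez a0 add0r.
have ca := colonC ha a0.
case: (ltgtP (v a) (v (x * s))) => hcmp.
- have [_ e1] := vD_lt hv a0 xs0 hcmp.
  by left; move: vz; rewrite ez e1; lia.
- have [_ e1] := vD_lt hv xs0 a0 hcmp.
  by apply: hright; rewrite ez addrC e1.
- have z0' : a + x * s != 0 by rewrite -ez.
  have := vD_ge hv a0 xs0 z0' (lexx (v a)) (ltac:(by rewrite hcmp)).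
  by rewrite -ez vz => h; left; lia.
Qed.


Hypothesis hk : rlength R R N 2.

Lemma k_count : newc v R N 0 c = 2.
Proof.
have := rlength_count hR hai hrr (lo := 0) (N0 := c%:Z) hk.
rewrite subr0 absz_nat; apply.
- move=> z hz; exists z, 0; split; [|exact: R0 hR|by rewrite mulr0 addr0].
  move=> w hw; apply: Rc; rewrite -[c%:Z]addr0; exact: (gev_mul hv).
- exact: R_ge0 hR hai.
- by [].
Qed.

Lemma yge : (e < y)%N.
Proof.
have := he3 (n := y) ltac:(lia) hy1; rewrite leq_eqVlt => /orP [/eqP ey|//].
by exfalso; apply: hy3; rewrite -ey subnn; split => //; exact: S0.
Qed.

Lemma third s : S s -> (s < c)%N -> s != 0%N -> s != y -> (e <= s)%N /\ S (s - e).
Proof.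
move=> hs hsc s0 sy.
case: (ClassicalDescription.excluded_middle_informative ((e <= s)%N /\ S (s - e))) => // hn.
exfalso.
have H := count_list (P := fun j : nat => db (vs v R (0 + j%:Z) /\ ~ vs v N (0 + j%:Z))) (L := [:: 0%N; y; s]) (n := c).
rewrite -/(newc v R N 0 c) k_count /= in H.
have hy := yge.
have hPj : forall j : nat, S j -> (j < c)%N -> ~ ((e <= j)%N /\ S (j - e)) ->
    db (vs v R (0 + j%:Z) /\ ~ vs v N (0 + j%:Z)).
  move=> j hj hjc hnj; apply/dbP; rewrite add0r; split; first by apply/(vs_vset R v).
  by move/vsN => [h|h] //; lia.
suff : (3 <= 2)%N by [].
apply: H.
- rewrite /= !inE negb_or (eq_sym y) sy andbT.
  apply/andP; split; apply/eqP; lia.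
- move=> j; rewrite !inE => /or3P [] /eqP ->.
  + by apply: hPj; [exact: S0|lia|lia].
  + by apply: hPj => //; lia.
  + by apply: hPj.
- move=> j; rewrite !inE => /or3P [] /eqP ->; lia.
Qed.

Lemma Sstruct s : S s -> (s < c)%N ->
  (exists2 j, (j <= p)%N & s = (j * e)%N) \/ (exists2 i, (i <= l)%N & s = (y + i * e)%N).
Proof.
elim: s {-2}s (leqnn s) => [|n IH] s hsn hs hsc.
  by left; exists 0%N => //; lia.
case: (eqVneq s 0%N) => [->|s0]; first by left; exists 0%N.
case: (eqVneq s y) => [->|sy]; first by right; exists 0%N => //; rewrite mul0n addn0.
have [hes hse] := third hs hsc s0 sy.
have [[j hj ej]|[i hi ei]] := IH (s - e)%N ltac:(lia) hse ltac:(lia).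
  left; exists j.+1; last by rewrite mulSn -ej; lia.
  have : (j.+1 * e < p.+1 * e)%N by rewrite mulSn -ej; move: hp1; rewrite mulSn; lia.
  by rewrite ltn_mul2r => /andP [_]; lia.
right; exists i.+1; last by rewrite mulSn addnCA -ei; lia.
have : (i.+1 * e < l.+1 * e)%N by move: hl2; rewrite !mulSn; lia.
by rewrite ltn_mul2r => /andP [_]; lia.
Qed.

Lemma ae_ex : exists ae, [/\ R ae, ae != 0 & v ae = e%:Z].
Proof. exact: he2. Qed.

Lemma Sje j : S (j * e)%N.
Proof.
have [ae [ha a0 va]] := ae_ex.
exists (ae ^+ j); split; [exact: RX|exact: expf_neq0|].
by rewrite (vX hv) // va -PoszM.
Qed.

Lemma Syie i : S (y + i * e)%N.
Proof.
have [ae [ha a0 va]] := ae_ex.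
have [w [hw w0 vw]] := hy1.
exists (w * ae ^+ i); split; [exact: RM hR _ _ hw (RX hR _ ha)|by rewrite mulf_neq0 // expf_neq0|].
by rewrite (vM hv) ?expf_neq0 // (vX hv) // va vw; lia.
Qed.

Lemma ynotmul j : y != (j * e)%N.
Proof.
apply/eqP => ey; apply: hy3; have := yge; rewrite ey => hj.
split; first by lia.
have -> : (j * e - e = j.-1 * e)%N by rewrite -{2}(mul1n e) -mulnBl subn1.
exact: Sje.
Qed.

Definition Lst := [seq (j * e)%N | j <- iota 0 p.+1] ++ [seq (y + i * e)%N | i <- iota 0 l.+1].

Lemma Lst_uniq : uniq Lst.
Proof.
rewrite cat_uniq; apply/and3P; split.
- rewrite map_inj_uniq ?iota_uniq // => a b /eqP; rewrite eqn_pmul2r // => /eqP.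
  exact.
- apply/hasPn => z /mapP [i _ ->]; apply/mapP => [] [j _ ej].
  by move/eqP: (ynotmul (j - i)); apply; rewrite mulnBl; lia.
- rewrite map_inj_uniq ?iota_uniq // => a b /eqP; rewrite eqn_add2l eqn_pmul2r // => /eqP.
  exact.
Qed.

Lemma Lst_mem j : (j < c)%N -> S j <-> j \in Lst.
Proof.
move=> hj; split.
  move/Sstruct => /(_ hj) [[i hi ->]|[i hi ->]]; rewrite mem_cat; apply/orP;
    [left|right]; apply/mapP; exists i => //; rewrite mem_iota; lia.
rewrite mem_cat => /orP [] /mapP [i _ ->]; [exact: Sje|exact: Syie].
Qed.

Lemma Lst_lt j : j \in Lst -> (j < c)%N.
Proof.
rewrite mem_cat => /orP [] /mapP [i]; rewrite mem_iota => /andP [_ hi] ->.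
  by apply: leq_ltn_trans hp2; rewrite leq_mul2r; lia.
by apply: leq_ltn_trans hl1; rewrite leq_add2l leq_mul2r; lia.
Qed.

Lemma Lst_size : size Lst = (p + l + 2)%N.
Proof. by rewrite size_cat !size_map !size_iota; lia. Qed.

Lemma countS : count (fun j : nat => db (vs v R (0 + j%:Z))) (iota 0 c) = (p + l + 2)%N.
Proof.
rewrite -Lst_size; apply: count_list_eq; [exact: Lst_uniq| |exact: Lst_lt].
move=> j hj; apply/dbP/idP; rewrite add0r.
  by move/(vs_vset R v)/(Lst_mem hj).
by move/(Lst_mem hj)/(vs_vset R v).
Qed.

Variable delta : nat.
Hypothesis hdelta : rlength R (vring v) R delta.

Lemma delta_eq : delta = (c - (p + l + 2))%N.
Proof.
have hgt : forall z, vring v z -> z != 0 -> 0 <= v z by move=> z [->|//]; rewrite eqxx.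
have H := rlength_count hR hai hrr (lo := 0) (N0 := c%:Z) hdelta Rc hgt (ltac:(by [])).
rewrite subr0 absz_nat in H; rewrite -H.
have E := count_predC (fun j : nat => db (vs v R (0 + j%:Z))) (iota 0 c).
rewrite countS size_iota in E.
have -> : (c - (p + l + 2))%N = count (predC (fun j : nat => db (vs v R (0 + j%:Z)))) (iota 0 c) by lia.
rewrite /newc; apply: eq_count => j /=.
  have [t [t0 vt]] := t_ex.
  apply/dbP/idP => [[_ h]|/dbP h]; first by apply/dbP.
  split=> //; exists (t ^+ j); split; [exact: vring_t|exact: expf_neq0|].
  by rewrite (vX hv) // vt mulr1 add0r.
Qed.

Lemma ae_max ae : R ae -> ae != 0 -> v ae = e%:Z -> maxideal R ae.
Proof.
move=> ha a0 va; split => // [] [_ _ hi].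
have := R_ge0 hR hai hi; rewrite invr_eq0 => /(_ a0).
by rewrite (vV hv) // va; lia.
Qed.

Lemma max_ge a : maxideal R a -> a = 0 \/ e%:Z <= v a.
Proof.
move=> hm; case: (eqVneq a 0) => [->|a0]; first by left.
case: (maxideal_pos hm) => [->|hp]; first by left.
right; case: hm => ha _.
have hs : vset R v `|v a|%N by exists a; split => //; lia.
have := he3 (n := `|v a|%N) ltac:(lia) hs; lia.
Qed.

Lemma zcolon w ae : R w -> w != 0 -> v w = y%:Z -> R ae -> ae != 0 -> v ae = e%:Z ->
  (c + e <= y + y)%N -> colon R (maxideal R) (w / ae).
Proof.
move=> hw w0 vw ha a0 va hA.
set z := w / ae.
have z0 : z != 0 by rewrite mulf_neq0 // invr_eq0.
have vz : v z = y%:Z - e%:Z by rewrite (vM hv) ?invr_eq0 // (vV hv) // vw va.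
suff H : forall n : nat, forall a, R a -> (a = 0 \/ 0 < v a) -> c%:Z - v a <= n%:Z -> R (z * a).
  move=> a hm; case: (eqVneq a 0) => [->|a0']; first by rewrite mulr0; exact: R0 hR.
  have [e0|hp] := maxideal_pos hm; first by rewrite e0 eqxx in a0'.
  by case: hm => hma _; apply: (H `|c%:Z - v a|%N) => //; [right|lia].
have hyv := yge.
elim=> [|n IH] a haR hpos hn.
- case: (eqVneq a 0) => [->|a0']; first by rewrite mulr0; exact: R0 hR.
  case: hpos => [e0|hp]; first by rewrite e0 eqxx in a0'.
  apply: Rc; right.
  rewrite (vM hv) // vz; move: hn hp; move: (v a) => q; lia.
case: (eqVneq a 0) => [->|a0']; first by rewrite mulr0; exact: R0 hR.
case: hpos => [e0|hp]; first by rewrite e0 eqxx in a0'.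
case: (leP c%:Z (v a)) => hca.
  apply: Rc; right; rewrite (vM hv) // vz; move: hca; move: (v a) => q; lia.
have hSa : S `|v a|%N by exists a; split => //; lia.
have [u [hu u0 vu hzu]] : exists u, [/\ R u, u != 0, v u = v a & R (z * u)].
  have [[j hj ej]|[i hi ei]] := Sstruct hSa ltac:(lia).
  - exists (ae ^+ j); split; [exact: RX|exact: expf_neq0| |].
      by rewrite (vX hv) // va; lia.
    case: j ej hj => [|j] ej hj; first by move: hp; lia.
    rewrite /z exprS mulrA mulfVK //; exact: RM hR _ _ hw (RX hR _ ha).
  - exists (w * ae ^+ i); split; [exact: RM hR _ _ hw (RX hR _ ha)|by rewrite mulf_neq0 // expf_neq0| |].
      by rewrite (vM hv) ?expf_neq0 // (vX hv) // va vw; lia.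
    case: i ei hi => [|i] ei hi.
      apply: Rc; right; rewrite expr0 mulr1 (vM hv) // vz vw; lia.
    have -> : z * (w * ae ^+ i.+1) = (w * w) * ae ^+ i.
      by rewrite /z exprS mulrCA !mulrA mulfVK // mulrC mulrA.
    by apply: (RM hR); [apply: (RM hR)|apply: (RX hR)].
have hau : vring v (a / u).
  by right; rewrite (vM hv) ?invr_eq0 // (vV hv) // vu; lia.
have [lam [hl hul]] := hrr hau.
have hzl : R (z * (lam * u)) by rewrite mulrCA; apply: (RM hR).
case: hul => [el|hpos].
  by rewrite (_ : a = lam * u) // -el mulfVK.
case: (eqVneq (a / u - lam) 0) => [d0|d0].
  by move/eqP: d0; rewrite subr_eq0 => /eqP el; rewrite (_ : a = lam * u) // -el mulfVK.
set a' := a - lam * u.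
have ea' : a' = u * (a / u - lam) by rewrite /a' mulrBr mulrCA mulfV // mulr1 mulrC.
have ha' : R a' by apply: (RB hR) => //; apply: (RM hR).
have va' : v a' = v a + v (a / u - lam) by rewrite ea' (vM hv) // vu.
have -> : z * a = z * a' + z * (lam * u) by rewrite -mulrDr /a' subrK.
apply: (RD hR) => //; apply: (IH a' ha').
  by right; rewrite va'; move: hp hpos; move: (v a) (v (a / u - lam)) => q q'; lia.
by rewrite va'; move: hn hpos; move: (v a) (v (a / u - lam)) => q q'; lia.
Qed.

Variable r : nat.
Hypothesis hr : rlength R (colon R (maxideal R)) R r.

Lemma r_ge : (c + e <= y + y)%N -> (e <= r.+1)%N.
Proof.
move=> hA.
have [ae [ha a0 va]] := ae_ex.
have [w [hw w0 vw]] := hy1.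
have hmax := ae_max ha a0 va.
have hcol : forall z, colon R (maxideal R) z -> z != 0 -> - e%:Z <= v z.
  move=> z hz z0; have h := R_ge0 hR hai (hz _ hmax) (mulf_neq0 z0 a0).
  by move: h; rewrite (vM hv) // va; lia.
have H := rlength_count hR hai hrr (lo := - e%:Z) (N0 := c%:Z) hr Rc hcol ltac:(lia).
rewrite (_ : `|c%:Z - - e%:Z|%N = (c + e)%N) in H; last by lia.
rewrite -H.
have hy := yge.
set A := (p.+1 * e)%N.
set B := (y + l.+1 * e)%N.
have AB : A != B.
  apply/eqP => eAB; move/eqP: (ynotmul (p - l)); apply.
  move: eAB; rewrite /A /B mulnBl !mulSn => eAB.
  have : (l * e <= p * e)%N by lia.
  lia.
have hAr : (c <= A < c + e)%N by rewrite /A mulSn; apply/andP; split; lia.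
have hBr : (c <= B < c + e)%N by move: hl1 hl2; rewrite /B !mulSn; move=> *; apply/andP; split; lia.
have cnt := count2 AB hAr hBr.
set F := filter (fun j => (j != A) && (j != B)) (iota c e).
have hF : forall j, j \in F -> [/\ (c <= j)%N, (j < c + e)%N, j != A & j != B].
  by move=> j; rewrite mem_filter mem_iota => /andP [/andP [h1 h2] /andP [h3 h4]]; split.
have HL := count_list (P := fun j : nat => db (vs v (colon R (maxideal R)) (- e%:Z + j%:Z) /\ ~ vs v R (- e%:Z + j%:Z)))
  (L := y :: F) (n := (c + e)%N).
have szL : size (y :: F) = (e - 2).+1 by rewrite /= size_filter cnt.
rewrite szL in HL.
suff : ((e - 2).+1 <= newc v (colon R (maxideal R)) R (- e%:Z) (c + e))%N by lia.
apply: HL.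
- rewrite /= filter_uniq ?iota_uniq // andbT.
  by apply/negP => /hF [h1 _ _ _]; lia.
- move=> j; rewrite inE => /orP [/eqP ->|/hF [h1 h2 h3 h4]]; apply/dbP.
    rewrite (_ : - e%:Z + y%:Z = (y - e)%N%:Z); last by lia.
    split.
      exists (w / ae); split; first exact: zcolon.
        by rewrite mulf_neq0 // invr_eq0.
      by rewrite (vM hv) ?invr_eq0 // (vV hv) // vw va; lia.
    by move/(vs_vset R v) => hs; apply: hy3; split => //; lia.
  rewrite (_ : - e%:Z + j%:Z = (j - e)%N%:Z); last by lia.
  have [t [t0 vt]] := t_ex.
  split.
    exists (t ^+ (j - e)); split; last 2 first.
    + exact: expf_neq0.
    + by rewrite (vX hv) // vt mulr1.
    move=> a hm; apply: Rc; case: (max_ge hm) => [->|hae]; first by left; rewrite mulr0.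
    case: (eqVneq a 0) => [->|a0']; first by left; rewrite mulr0.
    by right; rewrite (vM hv) ?expf_neq0 // (vX hv) // vt mulr1; lia.
  move/(vs_vset R v) => hs.
  have [[i hi ei]|[i hi ei]] := Sstruct hs ltac:(lia).
  + case: (ltnP i p) => hip.
      have : (i.+1 * e <= p * e)%N by rewrite leq_mul2r hip orbT.
      by rewrite mulSn -ei; lia.
    have eip : i = p by lia.
    by move: h3; rewrite /A mulSn -eip -ei; lia.
  + case: (ltnP i l) => hil.
      have : (i.+1 * e <= l * e)%N by rewrite leq_mul2r hil orbT.
      by rewrite mulSn; lia.
    have eil : i = l by lia.
    by move: h4; rewrite /B mulSn -eil addnCA -ei; lia.
- move=> j; rewrite inE => /orP [/eqP ->|/hF [h1 h2 h3 h4]] //; lia.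
Qed.

Lemma no_cond n : S n -> n.+1 = c -> False.
Proof.
move=> hn ec.
have : (c <= n)%N; last by lia.
apply: hc3 => // m hm; case: (eqVneq m n) => [->//|mn]; apply: hc2; lia.
Qed.

Lemma N1 : (p + l + 2 <= c)%N.
Proof. by rewrite -countS; apply: leq_trans (count_size _ _) _; rewrite size_iota. Qed.

Lemma N3 : c != (p * e).+1.
Proof. by apply/eqP => ec; apply: (no_cond (Sje p)). Qed.

Lemma N4 : (l < p)%N.
Proof.
have hy := yge.
have : (l.+1 * e < p.+1 * e)%N.
  by move: hl1 hp1; rewrite !mulSn; lia.
by rewrite ltn_mul2r => /andP [_]; lia.
Qed.

Lemma N6 : p = l.+1 -> c = (p * e + 2)%N -> False.
Proof.
move=> pl ec; have hy := yge.
have ey : y = e.+1 by move: hl1; rewrite ec pl mulSn; lia.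
apply: (no_cond (Syie l)); move: ec; rewrite ey pl mulSn; lia.
Qed.

Lemma N5 : r.+2 = e -> (p <= l.*2.+2)%N /\ (p = l.*2.+2 -> (c < p.+1 * e)%N).
Proof.
move=> re.
have hy := yge.
have hS2 : S (y + y).
  have [w [hw w0 vw]] := hy1.
  exists (w * w); split; [exact: (RM hR)|exact: mulf_neq0|by rewrite (vM hv) // vw].
case: (ltnP (y + y) c) => h2y.
  have [[j hj ej]|[i hi ei]] := Sstruct hS2 h2y; last first.
    by move/eqP: (ynotmul i); case; lia.
  have hje : (j * e <= p * e)%N by rewrite leq_mul2r hj orbT.
  have : (p < l.*2.+2)%N by move: hl2 hp2; nia.
  by move=> h; split; lia.
have hn : ~ (c + e <= y + y)%N.
  by move=> hA; have := r_ge hA; lia.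
have hyl : (y < l.+2 * e)%N by move: hl2; nia.
split; first by move: hp2 hl2; nia.
move=> ep; case: (ltnP c (p.+1 * e)) => // hc.
by exfalso; move: hc hl2 hyl; rewrite ep; nia.
Qed.

Variable h : nat.
Hypothesis hh : h%:Z = (p.+1 * e)%:Z - c%:Z.

Lemma final :
  let b : int := (c%:Z - delta%:Z) * r%:Z - delta%:Z in
  (r%:Z = e%:Z - 1 ->
     [/\ b = (l.+1 * e + h)%:Z, b <= (l.+2 * e)%:Z - 2
       & b = (l.+2 * e)%:Z - 2 <-> h%:Z = e%:Z - 2]) /\
  (r%:Z = e%:Z - 2 ->
     [/\ b = l.+1%:Z * (e%:Z - 1) + h%:Z - p%:Z - 1,
         c%:Z = (p + l.+2)%:Z * (e%:Z - 1) - b,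
         ((l.+1 <= p)%N /\ (p <= l.*2.+2)%N) /\ (p = l.*2.+2 -> (0 < h)%N),
         (l.+1%:Z * (e%:Z - 3) <= b /\ b <= l.+1%:Z * (e%:Z - 2) + e%:Z - 3)
       & (b = l.+1%:Z * (e%:Z - 3) <->
            (p = l.*2.+2 /\ h = 1%N) \/ (p = l.*2.+1 /\ h = 0%N)) /\
         (b = l.+1%:Z * (e%:Z - 2) + e%:Z - 3 ->
            [/\ p = l.+1, (1 < p)%N, h%:Z = e%:Z - 2 & y = e.+1])]).
Proof.
move=> b.
have d := delta_eq.
have n1 := N1.
have hy := yge.
have n3 := N3.
have n4 := N4.
have ed : c%:Z - delta%:Z = (p + l + 2)%:Z by rewrite d; lia.
have eb : b = (p + l + 2)%:Z * r%:Z - (c%:Z - (p + l + 2)%:Z) by rewrite /b ed d; lia.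
move: hp1 hp2 hh n1 n3 n4 hy; rewrite !mulSn => hp1' hp2' hh' n1' n3' n4' hy'.
split => hr'.
  rewrite eb hr'.
  split; try lia.
have [n5 n5'] := N5 ltac:(lia).
have n6 := N6.
rewrite eb hr'.
split; try lia.
all: try (split; [split; lia|move=> hp; have := n5' hp; rewrite mulSn; lia]).
all: try (split; first by split; lia).
all: try (by move=> heq; exfalso; apply: n6; lia).
Qed.

End Main.

Unset Implicit Arguments.
Set Strict Implicit.

Theorem lemma2p3 (K : fieldType) (R : K -> Prop) (v : K -> int)
  (hR : subring R) (hQ : quotfield R) (hloc : local_ring R)
  (hnoeth : noetherian R) (hdim : one_dim_local R) (hreg : ~ regular R)
  (hai : analytically_irreducible R v) (hrr : residually_rational R v)
  (c delta r e k p h y l : nat) (x : K)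
  (* c : least element of v(R) with c + N contained in v(R) *)
  (hc1 : vset R v c) (hc2 : forall m, (c <= m)%N -> vset R v m)
  (hc3 : forall c', vset R v c' -> (forall m, (c' <= m)%N -> vset R v m) -> (c <= c')%N)
  (* delta = l_R(Rbar / R),  r = l_R((R :_K m) / R) *)
  (hdelta : rlength R (vring v) R delta)
  (hr : rlength R (colon R (maxideal R)) R r)
  (* e : least positive element of v(R) *)
  (he1 : (0 < e)%N) (he2 : vset R v e)
  (he3 : forall n, (0 < n)%N -> vset R v n -> (e <= n)%N)
  (* x in m with v(x) = e, k = l_R(R/(C + xR)) with C = (R :_K Rbar) *)
  (hx1 : maxideal R x) (hx2 : v x = e%:Z)
  (hk : rlength R R (sum_mul (colon R (vring v)) x R) k)
  (* p, h *)
  (hp1 : c%:Z - e%:Z <= (p * e)%:Z) (hp2 : (p * e < c)%N)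
  (hh : h%:Z = (p.+1 * e)%:Z - c%:Z)
  (* k = 2, y = y_1, l = l_1 *)
  (hk2 : k = 2%N)
  (hy1 : vset R v y) (hy2 : (0 < y < c)%N)
  (hy3 : ~ ((e <= y)%N /\ vset R v (y - e)))
  (hl1 : (y + l * e < c)%N) (hl2 : (c <= y + l.+1 * e)%N) :
  let b : int := (c%:Z - delta%:Z) * r%:Z - delta%:Z in
  (r%:Z = e%:Z - 1 ->
     [/\ b = (l.+1 * e + h)%:Z, b <= (l.+2 * e)%:Z - 2
       & b = (l.+2 * e)%:Z - 2 <-> h%:Z = e%:Z - 2]) /\
  (r%:Z = e%:Z - 2 ->
     [/\ b = l.+1%:Z * (e%:Z - 1) + h%:Z - p%:Z - 1,
         c%:Z = (p + l.+2)%:Z * (e%:Z - 1) - b,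
         ((l.+1 <= p)%N /\ (p <= l.*2.+2)%N) /\ (p = l.*2.+2 -> (0 < h)%N),
         (l.+1%:Z * (e%:Z - 3) <= b /\ b <= l.+1%:Z * (e%:Z - 2) + e%:Z - 3)
       & (b = l.+1%:Z * (e%:Z - 3) <->
            (p = l.*2.+2 /\ h = 1%N) \/ (p = l.*2.+1 /\ h = 0%N)) /\
         (b = l.+1%:Z * (e%:Z - 2) + e%:Z - 3 ->
            [/\ p = l.+1, (1 < p)%N, h%:Z = e%:Z - 2 & y = e.+1])]).

Proof.
move=> b; subst k.
exact: (final hR hQ hloc hai hrr hc2 hc3 he1 he2 he3 hp1 hp2 hy1 hy2 hy3 hl1 hl2 hx2 hk hdelta hr hh).
Qed.
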